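(* For every combinatorial auction with $d$-strong-SOS valuations ($d\ge1$) over single-dimensional signals $s_i\in\{0,1,\dots,k-1\}$ ($k\ge2$ a power of $2$), the mechanism that runs Random Bucket with probability $\frac{d\log_2k}{d\log_2k+2}$ and Random Sampling otherwise is universally ex-post IC-IR and gives a $\big(d(d+1)\log_2k+2(d+1)\big)$-approximation to the optimal social welfare.
   Context: Setting: $n$ agents, $m$ items; agent $i$ has private signal $s_i$; value for bundle $T$ is $v_{iT}(\mathbf{s})\ge0$, public, weakly increasing in each coordinate, strictly in $s_i$. $d$-strong-SOS: for every $j$, $\delta\ge0$, and profiles $\mathbf{s}'\le\mathbf{s}$ coordinate-wise, $d\big(v(\mathbf{s}'_{-j},s'_j+\delta)-v(\mathbf{s}'_{-j},s'_j)\big)\ge v(\mathbf{s}_{-j},s_j+\delta)-v(\mathbf{s}_{-j},s_j)$; every $v_{iT}$ is $d$-strong-SOS. Allocations assign disjoint bundles. Random Bucket: choose $\ell$ uniformly in $\{1,\dots,\log_2k\}$; $N_{B_\ell}=\{i:s_i\ge2^{\ell-1}\}$; for $i\in N_{B_\ell}$, $\bar v_{iT}=v_{iT}(\mathbf{s}_{N_{\neg B_\ell}},\mathbf{2^{\ell-1}}_{N_{B_\ell}})$, else $0$; allocate a $\bar v$-welfare-maximizing allocation among $N_{B_\ell}$; agent receiving $\bar T_i$ pays $v_{i\bar T_i}(\mathbf{s}_{-i},2^{\ell-1}-1)$. Random Sampling: split agents uniformly at random into $A,B$; for $i\in B$, $\tilde v_{iT}=v_{iT}(\mathbf{s}_A,\mathbf{0}_B)$,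 for $i\in A$, $0$; allocate a $\tilde v$-welfare-maximizing allocation among $B$; no payments. *)

(* Defs.v *)
From HB Require Import structures.
From mathcomp Require Import all_boot all_order all_algebra.
Set Implicit Arguments. Unset Strict Implicit. Unset Printing Implicit Defensive.
Import Order.TTheory GRing.Theory Num.Theory.
Local Open Scope ring_scope.

Definition profile (n : nat) := 'I_n -> nat.
Definition allocation (n m : nat) := 'I_n -> {set 'I_m}.
(* v i T s = v_{iT}(s). *)
Definition valuations (R : realFieldType) (n m : nat) :=
  'I_n -> {set 'I_m} -> profile n -> R.

Definition upd {n : nat} (s : profile n) (j : 'I_n) (x : nat) : profile n :=
  fun i => if i == j then x else s i.

Definition in_dom {n : nat} (k : nat) (s : profile n) := forall i, (s i < k)%N.
Definition prof_le {n : nat} (s s' : profile n) := forall i, (s i <= s' i)%N.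

Definition feasible {n m : nat} (X : allocation n m) :=
  forall i j, i != j -> [disjoint X i & X j].

Definition welfare {R : realFieldType} {n m : nat}
  (w : 'I_n -> {set 'I_m} -> R) (X : allocation n m) : R :=
  \sum_i w i (X i).

Definition strong_SOS {R : realFieldType} {n : nat} (k : nat) (d : R)
  (f : profile n -> R) :=
  forall (j : 'I_n) (delta : nat) (s' s : profile n),
    in_dom k s -> prof_le s' s -> (s j + delta < k)%N ->
    f (upd s j (s j + delta)) - f s <= d * (f (upd s' j (s' j + delta)) - f s').

Definition valuation_ok {R : realFieldType} {n m : nat} (k : nat) (d : R)
  (v : valuations R n m) :=
  [/\ forall i s, in_dom k s -> v i set0 s = 0,
      forall i T s, in_dom k s -> 0 <= v i T s,
      forall i T s s', in_dom k s' -> prof_le s s' -> v i T s <= v i T s',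
      forall i T s x y, T != set0 -> in_dom k s -> (x < y)%N -> (y < k)%N ->
        v i T (upd s i x) < v i T (upd s i y)
    & forall i T, strong_SOS k d (v i T)].

(* A welfare-maximizing allocation rule (with arbitrary tie-breaking):
   sel S w is a feasible allocation giving nothing outside S and maximizing
   the w-welfare among all such allocations. *)
Definition wm_selector {R : realFieldType} {n m : nat}
  (sel : {set 'I_n} -> ('I_n -> {set 'I_m} -> R) -> allocation n m) :=
  forall S w,
    [/\ feasible (sel S w),
        (forall i, i \notin S -> sel S w i = set0)
      & forall X : allocation n m, feasible X -> (forall i, i \notin S -> X i = set0) ->
          welfare w X <= welfare w (sel S w)].

Section Mechanisms.
Context {R : realFieldType} {n m : nat}.
Variable sel : {set 'I_n} -> ('I_n -> {set 'I_m} -> R) -> allocation n m.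
Variable v : valuations R n m.

(* Random Bucket with bucket index l = j+1, threshold 2^(l-1) = 2^j. *)
Definition bucket_set (j : nat) (r : profile n) : {set 'I_n} :=
  [set i | (2 ^ j <= r i)%N].
Definition bucket_val (j : nat) (r : profile n) : 'I_n -> {set 'I_m} -> R :=
  fun i T => if i \in bucket_set j r
             then v i T (fun a => if a \in bucket_set j r then (2 ^ j)%N else r a)
             else 0.
Definition RB_alloc (j : nat) (r : profile n) : allocation n m :=
  sel (bucket_set j r) (bucket_val j r).
Definition RB_pay (j : nat) (r : profile n) (i : 'I_n) : R :=
  if i \in bucket_set j r then v i (RB_alloc j r i) (upd r i (2 ^ j).-1) else 0.

(* Random Sampling with B the sampled "winning" side, A = ~: B. *)
Definition RS_val (B : {set 'I_n}) (r : profile n) : 'I_n -> {set 'I_m} -> R :=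
  fun i T => if i \in B then v i T (fun a => if a \in B then 0%N else r a) else 0.
Definition RS_alloc (B : {set 'I_n}) (r : profile n) : allocation n m :=
  sel B (RS_val B r).

Definition utility (alloc : profile n -> allocation n m) (pay : profile n -> 'I_n -> R)
  (i : 'I_n) (s r : profile n) : R := v i (alloc r i) s - pay r i.

Definition expost_IC_IR (k : nat) (alloc : profile n -> allocation n m)
  (pay : profile n -> 'I_n -> R) :=
  forall s : profile n, in_dom k s -> forall i : 'I_n,
    0 <= utility alloc pay i s s /\
    forall x, (x < k)%N -> utility alloc pay i s (upd s i x) <= utility alloc pay i s s.

(* expected welfare of the mixed mechanism (L = log2 k) *)
Definition mech_welfare (d : R) (L : nat) (s : profile n) : R :=
  let p := d * L%:R / (d * L%:R + 2) in
  p * (L%:R^-1 * \sum_(j < L) welfare (fun i T => v i T s) (RB_alloc j s))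
  + (1 - p) * ((2 ^ n)%:R^-1 *
       \sum_(B : {set 'I_n}) welfare (fun i T => v i T s) (RS_alloc B s)).
End Mechanisms.

(* Main.v *)
Require Import Defs.
From HB Require Import structures.
From mathcomp Require Import all_boot all_order all_algebra.
From mathcomp Require Import ring lra.
From Stdlib Require Import FunctionalExtensionality.
Import Order.TTheory GRing.Theory Num.Theory.
Local Open Scope ring_scope.
Set Implicit Arguments. Unset Strict Implicit. Unset Printing Implicit Defensive.

Lemma pfext n (p q : profile n) : (forall a, p a = q a) -> p = q.
Proof. exact: functional_extensionality. Qed.

Definition ps n (s : profile n) (S : {set 'I_n}) : profile n :=
  fun a => if a \in S then s a else 0%N.

Lemma ps_le n (s : profile n) (S : {set 'I_n}) : prof_le (ps s S) s.
Proof. by move=> a; rewrite /ps; case: ifP. Qed.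

Lemma ps_dom n k (s : profile n) (S : {set 'I_n}) : in_dom k s -> in_dom k (ps s S).
Proof. move=> h a; exact: leq_ltn_trans (ps_le s S a) (h a). Qed.

Lemma ps_mono n (s : profile n) (S U : {set 'I_n}) : S \subset U -> prof_le (ps s S) (ps s U).
Proof.
move=> /subsetP h a; rewrite /ps; case: ifP => // /h ->; by [].
Qed.

Lemma ps_add n (s : profile n) (S : {set 'I_n}) j : j \notin S ->
  ps s (j |: S) = upd (ps s S) j (ps s S j + s j).
Proof.
move=> jS; apply: pfext => a; rewrite /ps /upd in_setU1 (negbTE jS) add0n.
by case: eqP => [->|_].
Qed.

Lemma chain (R : realFieldType) n k (d : R) (f : profile n -> R) (s : profile n) :
  in_dom k s -> strong_SOS k d f ->
  forall U S : {set 'I_n}, [disjoint S & U] ->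
   f (ps s (S :|: U)) - f (ps s S) <= d * (f (ps s U) - f (ps s set0)).
Proof.
move=> hs hf U; elim: {U}#|U| {-2}U (erefl #|U|) => [|c IH] U hU S dis.
  move/eqP: hU; rewrite cards_eq0 => /eqP ->; rewrite setU0 !subrr mulr0 //.
have : U != set0 by rewrite -cards_eq0 hU.
case/set0Pn => j jU.
have hU' : #|U :\ j| = c by move: hU; rewrite (cardsD1 j) jU add1n => -[].
have dis' : [disjoint S & U :\ j].
  exact: disjointWr (subD1set U j) dis.
have jS : j \notin S.
  by apply/negP => jS; move: (disjointFr dis jS); rewrite jU.
have jSU : j \notin S :|: U :\ j by rewrite in_setU negb_or jS !inE eqxx.
have jU' : j \notin U :\ j by rewrite !inE eqxx.
have e1 : S :|: U = j |: (S :|: U :\ j).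
  by rewrite setUCA setD1K.
have e2 : U = j |: (U :\ j) by rewrite setD1K.
have := IH _ hU' _ dis'.
have := hf j (s j) (ps s (U :\ j)) (ps s (S :|: U :\ j)) (ps_dom _ hs)
  (ps_mono _ (subsetUr _ _)).
rewrite {1}/ps (negbTE jSU) add0n => /(_ (hs j)).
rewrite -ps_add // -ps_add // -e1 -e2.
move=> h1 h2. lra.
Qed.
Lemma upd_dom n k (s : profile n) i x : in_dom k s -> (x < k)%N -> in_dom k (upd s i x).
Proof. by move=> h hx a; rewrite /upd; case: eqP. Qed.

Lemma upd_le n (p q : profile n) i x y : prof_le p q -> (x <= y)%N ->
  prof_le (upd p i x) (upd q i y).
Proof. by move=> h hx a; rewrite /upd; case: eqP. Qed.

Lemma le_dom n k (p q : profile n) : in_dom k q -> prof_le p q -> in_dom k p.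
Proof. move=> h l a; exact: leq_ltn_trans (l a) (h a). Qed.

Lemma own_bound (R : realFieldType) n k (d : R) (f : profile n -> R)
  (s b : profile n) i j :
  1 <= d -> in_dom k s -> strong_SOS k d f ->
  (forall p q, in_dom k q -> prof_le p q -> f p <= f q) ->
  (forall p, in_dom k p -> 0 <= f p) ->
  prof_le b s -> b i = (2 ^ j)%N -> (2 ^ j <= s i)%N -> (s i < 2 ^ j.+1)%N ->
  f s - f (upd s i 0) <= d * (d + 1) * f b.
Proof.
move=> d1 hs hf hm hn hbs hbi hj1 hj2.
have hb : in_dom k b := le_dom hs hbs.
have hk : (s i < k)%N := hs i.
have hz : in_dom k (upd s i 0) by apply: upd_dom => //; exact: leq_ltn_trans (leq0n _) hk.
have hz' : prof_le (upd b i 0) (upd s i 0) by exact: upd_le.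
have ui : forall (p : profile n) x, upd p i x i = x by move=> p x; rewrite /upd eqxx.
have h1 := hf i (s i) _ _ hz hz'.
rewrite !ui add0n in h1.
have e1 : upd (upd s i 0) i (s i) = s by apply: pfext => a; rewrite /upd; case: eqP => [->|].
rewrite e1 in h1; have {}h1 := h1 hk.
have hzb : prof_le (upd b i 0) b by move=> a; rewrite /upd; case: eqP.
set dl := (s i - 2 ^ j)%N.
have h2 := hf i dl _ _ hb hzb.
rewrite !ui add0n hbi subnKC // in h2.
have e2 : upd (upd b i 0) i (s i) = upd b i (s i) by apply: pfext => a; rewrite /upd; case: eqP.
rewrite e2 in h1; have {}h2 := h2 hk.
have hdl : (dl <= 2 ^ j)%N.
  rewrite /dl leq_subLR; rewrite expnS mul2n -addnn in hj2; exact: ltnW.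
have h3 : f (upd (upd b i 0) i dl) <= f b.
  apply: hm hb _ => a; rewrite /upd; case: eqP => [->|_] //; by rewrite hbi.
have h4 : 0 <= f (upd b i 0) by apply: hn; exact: le_dom hb hzb.
set A := f s in h1 *; set B := f (upd s i 0) in h1 *.
set C := f (upd b i (s i)) in h1 h2; set D := f (upd b i 0) in h1 h2 h4.
set E := f b in h2 h3 *; set F := f (upd (upd b i 0) i dl) in h2 h3.
have h5 : C - E <= d * (E - D) by apply: le_trans h2 _; apply: ler_wpM2l; lra.
have h6 : C - D <= (d + 1) * (E - D) by lra.
have h7 : d * (C - D) <= d * ((d + 1) * (E - D)) by apply: ler_wpM2l => //; lra.
have h8 : 0 <= d * (d + 1) by apply: mulr_ge0; lra.
have h9 : d * (d + 1) * (E - D) <= d * (d + 1) * E by apply: ler_wpM2l => //; lra.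
rewrite mulrA in h7. lra.
Qed.

Definition phi n (i : 'I_n) (B : {set 'I_n}) : {set 'I_n} :=
  [set x | if x == i then x \in B else x \notin B].
Definition tau n (i : 'I_n) (B : {set 'I_n}) : {set 'I_n} :=
  [set x | if x == i then x \notin B else x \in B].

Lemma phi_inj n (i : 'I_n) : injective (phi i).
Proof.
apply: (can_inj (g := phi i)) => B; apply/setP => x; rewrite !inE.
by case: eqP => // _; rewrite negbK.
Qed.
Lemma tau_inj n (i : 'I_n) : injective (tau i).
Proof.
apply: (can_inj (g := tau i)) => B; apply/setP => x; rewrite !inE.
by case: eqP => // _; rewrite negbK.
Qed.

Lemma card_sets n : #|{: {set 'I_n}}| = (2 ^ n)%N.
Proof. by rewrite -cardsT -powersetT card_powerset cardsT card_ord. Qed.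

Lemma half_count (R : realFieldType) n (i : 'I_n) (c : R) :
  (2 ^ n)%:R * c = 2 * \sum_(B : {set 'I_n} | i \in B) c.
Proof.
have e : \sum_(B : {set 'I_n}) c = (2 ^ n)%:R * c.
  by rewrite sumr_const card_sets mulr_natl.
rewrite -e (bigID [pred B : {set 'I_n} | i \in B]) /=.
rewrite [X in _ + X = _](reindex_inj (@tau_inj n i)) /=.
have -> : \sum_(j : {set 'I_n} | true && (i \notin tau i j)) c = \sum_(B : {set 'I_n} | true && (i \in B)) c.
  by apply: eq_bigl => B; rewrite inE eqxx negbK.
by rewrite mulrDl mul1r.
Qed.

Lemma rs_bound (R : realFieldType) n k (d : R) (f : profile n -> R)
  (s : profile n) (i : 'I_n) :
  1 <= d -> in_dom k s -> strong_SOS k d f ->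
  (forall p, in_dom k p -> 0 <= f p) ->
  (2 ^ n)%:R * f (upd s i 0) <=
    2 * (1 + d) * \sum_(B : {set 'I_n} | i \in B) f (ps s (~: B)).
Proof.
move=> d1 hs hf hn.
have key : forall B : {set 'I_n}, i \in B ->
    f (upd s i 0) <= f (ps s (~: B)) + d * f (ps s (~: phi i B)).
  move=> B iB.
  have dis : [disjoint ~: B & ~: phi i B].
    rewrite -setI_eq0; apply/eqP/setP => x; rewrite !inE.
    by case: eqP => [->|_]; rewrite ?iB ?negbK ?andbN // andbC andbN.
  have h := chain hs hf dis.
  have e : ~: B :|: ~: phi i B = ~: [set i].
    apply/setP => x; rewrite !inE; case: eqP => [->|_]; rewrite ?iB ?negbK //.
    by case: (x \in B).
  have e2 : ps s (~: [set i]) = upd s i 0.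
    by apply: pfext => a; rewrite /ps /upd !inE; case: eqP.
  rewrite e e2 in h.
  have h0 : 0 <= f (ps s set0) by apply: hn; exact: ps_dom.
  have h1 : d * (f (ps s (~: phi i B)) - f (ps s set0)) <= d * f (ps s (~: phi i B)).
    by apply: ler_wpM2l; lra.
  lra.
rewrite (@half_count _ _ i) -mulrA ler_pM2l //.
apply: (@le_trans _ _ (\sum_(B : {set 'I_n} | i \in B) (f (ps s (~: B)) + d * f (ps s (~: phi i B))))).
  by apply: ler_sum => B iB; apply: key.
rewrite big_split /= -mulr_sumr.
have -> : \sum_(B : {set 'I_n} | i \in B) f (ps s (~: phi i B)) = \sum_(B : {set 'I_n} | i \in B) f (ps s (~: B)).
  rewrite [RHS](reindex_inj (@phi_inj n i)) /=.
  by apply: eq_bigl => B; rewrite inE eqxx.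
by rewrite mulrDl mul1r.
Qed.

Lemma upd_upd n (s : profile n) i x y : upd (upd s i x) i y = upd s i y.
Proof. by apply: pfext => a; rewrite /upd; case: eqP. Qed.

Lemma upd_self n (s : profile n) i : upd s i (s i) = s.
Proof. by apply: pfext => a; rewrite /upd; case: eqP => [->|]. Qed.

Lemma bset_upd n j (s : profile n) i x y : (2 ^ j <= x)%N -> (2 ^ j <= y)%N ->
  bucket_set j (upd s i x) = bucket_set j (upd s i y).
Proof.
by move=> hx hy; apply/setP => a; rewrite !inE /upd; case: eqP => // _; rewrite hx hy.
Qed.

Lemma bval_upd (R : realFieldType) n m (v : valuations R n m) j (s : profile n) i x y :
  (2 ^ j <= x)%N -> (2 ^ j <= y)%N ->
  bucket_val v j (upd s i x) = bucket_val v j (upd s i y).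
Proof.
move=> hx hy; rewrite /bucket_val (bset_upd s i hx hy).
apply: functional_extensionality => i0; apply: functional_extensionality => T.
case: ifP => // _; congr (v i0 T _); apply: pfext => a.
case E: (a \in _) => //; rewrite /upd; case: eqP => // ai.
by move: E; rewrite ai inE /upd eqxx hy.
Qed.

Lemma RB_util (R : realFieldType) n m k (d : R) (v : valuations R n m) sel j
  (s : profile n) i x :
  valuation_ok k d v -> wm_selector sel -> in_dom k s ->
  utility v (RB_alloc sel v j) (RB_pay sel v j) i s (upd s i x) =
  if (2 ^ j <= x)%N then
    v i (RB_alloc sel v j (upd s i (2 ^ j)) i) s
    - v i (RB_alloc sel v j (upd s i (2 ^ j)) i) (upd s i (2 ^ j).-1)
  else 0.
Proof.
case=> h0 hnn hmono hstr hsos hsel hs.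
rewrite /utility /RB_pay.
have hin : (i \in bucket_set j (upd s i x)) = (2 ^ j <= x)%N by rewrite inE /upd eqxx.
rewrite hin; case: ifP => hx.
  have eA : RB_alloc sel v j (upd s i x) = RB_alloc sel v j (upd s i (2 ^ j)).
    by rewrite /RB_alloc (bset_upd s i hx (leqnn _)) (bval_upd v s i hx (leqnn _)).
  by rewrite eA upd_upd.
case: (hsel (bucket_set j (upd s i x)) (bucket_val v j (upd s i x))) => _ h _.
by rewrite /RB_alloc h ?hin ?hx // h0 // subrr.
Qed.

Lemma RB_IC (R : realFieldType) n m k L (d : R) (v : valuations R n m) sel
  (j : 'I_L) :
  k = (2 ^ L)%N -> valuation_ok k d v -> wm_selector sel ->
  expost_IC_IR v k (RB_alloc sel v j) (RB_pay sel v j).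
Proof.
move=> hk hv hsel s hs i.
have U := fun x => RB_util j i x hv hsel hs.
have U0 := U (s i); rewrite upd_self in U0.
case: hv => h0 hnn hmono hstr hsos.
set T := RB_alloc sel v j (upd s i (2 ^ j)) i in U U0.
have hjk : ((2 ^ j).-1 < k)%N.
  rewrite hk; apply: leq_ltn_trans (leq_pred _) _; rewrite ltn_exp2l //.
have hdom : in_dom k (upd s i (2 ^ j).-1) by exact: upd_dom.
have gpos : (2 ^ j <= s i)%N -> 0 <= v i T s - v i T (upd s i (2 ^ j).-1).
  move=> hj; rewrite subr_ge0; apply: hmono => // a; rewrite /upd; case: eqP => [->|_] //.
  by apply: leq_trans (leq_pred _) hj.
have gneg : ~~ (2 ^ j <= s i)%N -> v i T s - v i T (upd s i (2 ^ j).-1) <= 0.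
  rewrite -ltnNge => hj; rewrite subr_le0; apply: hmono => // a; rewrite /upd.
  case: eqP => [->|_] //; by rewrite -ltnS prednK ?expn_gt0.
split.
  by rewrite U0; case: ifP => h //; exact: gpos.
move=> x hx; rewrite U U0.
case: ifP => h1; case: ifP => h2 //.
- by apply: gneg; rewrite h2.
- by apply: gpos; rewrite h2.
Qed.

Lemma RS_IC (R : realFieldType) n m k (d : R) (v : valuations R n m) sel
  (B : {set 'I_n}) :
  valuation_ok k d v -> wm_selector sel ->
  expost_IC_IR v k (RS_alloc sel v B) (fun _ _ => 0).
Proof.
case=> h0 hnn hmono hstr hsos hsel s hs i.
have U : forall x, utility v (RS_alloc sel v B) (fun _ _ => 0) i s (upd s i x) =
    if i \in B then v i (RS_alloc sel v B s i) s else 0.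
  move=> x; rewrite /utility subr0; case: ifP => iB.
    rewrite /RS_alloc; have -> : RS_val v B (upd s i x) = RS_val v B s; last by [].
    apply: functional_extensionality => i0; apply: functional_extensionality => T.
    rewrite /RS_val; case: ifP => // _; congr (v i0 T _); apply: pfext => a.
    case: ifP => // aB; rewrite /upd; case: eqP => // ai.
    by rewrite ai iB in aB.
  case: (hsel B (RS_val v B (upd s i x))) => _ h _.
  by rewrite /RS_alloc h ?iB // h0.
have U0 := U (s i); rewrite upd_self in U0.
split; first by rewrite U0; case: ifP => // _; exact: hnn.
by move=> x hx; rewrite U U0.
Qed.

Lemma feas_restrict n m (X : allocation n m) (P : pred 'I_n) :
  feasible X -> feasible (fun i => if P i then X i else set0).
Proof.
move=> h a b ab; case: ifP => _; case: ifP => _; rewrite ?h //;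
  by rewrite -setI_eq0 ?setI0 ?set0I.
Qed.

Lemma RS_part (R : realFieldType) n m k (d : R) (v : valuations R n m) sel
  (s : profile n) (X : allocation n m) :
  1 <= d -> valuation_ok k d v -> wm_selector sel -> in_dom k s -> feasible X ->
  (2 ^ n)%:R * \sum_i v i (X i) (upd s i 0) <=
  2 * (1 + d) * \sum_(B : {set 'I_n}) welfare (fun i T => v i T s) (RS_alloc sel v B s).
Proof.
move=> d1 hv hsel hs hX; have hv' := hv; case: hv' => h0 hnn hmono hstr hsos.
rewrite mulr_sumr.
apply: le_trans.
  apply: ler_sum => i _; apply: (rs_bound (f := v i (X i)) i d1 hs (hsos _ _)).
  by move=> p hp; exact: hnn.
rewrite -mulr_sumr; apply: ler_wpM2l; first lra.
under eq_bigr do rewrite big_mkcond.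
rewrite exchange_big /=.
apply: ler_sum => B _; rewrite -big_mkcond /=.
set XB : allocation n m := fun i => if i \in B then X i else set0.
have e : \sum_(i | i \in B) v i (X i) (ps s (~: B)) = welfare (RS_val v B s) XB.
  rewrite /welfare big_mkcond; apply: eq_bigr => i _; rewrite /RS_val /XB.
  case: ifP => iB //; congr (v _ _ _); apply: pfext => a; rewrite /ps inE.
  by case: (a \in B).
rewrite e; case: (hsel B (RS_val v B s)) => _ _ hmax.
apply: le_trans (hmax XB (feas_restrict _ hX) _) _.
  by move=> i iB; rewrite /XB (negbTE iB).
rewrite /welfare /RS_alloc; apply: ler_sum => i _; rewrite /RS_val.
case: ifP => iB; last exact: hnn.
apply: hmono => // a; by case: ifP.
Qed.

Lemma bprof_le n j (s : profile n) :
  prof_le (fun a => if a \in bucket_set j s then (2 ^ j)%N else s a) s.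
Proof. by move=> a; case: ifP => //; rewrite inE. Qed.

Lemma RB_part (R : realFieldType) n m k L (d : R) (v : valuations R n m) sel
  (s : profile n) (X : allocation n m) :
  k = (2 ^ L)%N -> 1 <= d -> valuation_ok k d v -> wm_selector sel -> in_dom k s ->
  feasible X ->
  \sum_i (v i (X i) s - v i (X i) (upd s i 0)) <=
  d * (d + 1) * \sum_(j < L) welfare (fun i T => v i T s) (RB_alloc sel v j s).
Proof.
move=> hk d1 hv hsel hs hX; have hv' := hv; case: hv' => h0 hnn hmono hstr hsos.
pose t i := trunc_log 2 (s i).
pose cond i (j : 'I_L) := (0 < s i)%N && (t i == j).
pose b (j : nat) : profile n := fun a => if a \in bucket_set j s then (2 ^ j)%N else s a.
have hK : 0 <= d * (d + 1) by apply: mulr_ge0; lra.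
have tP : forall i, (0 < s i)%N -> (2 ^ t i <= s i)%N /\ (s i < 2 ^ (t i).+1)%N /\ (t i < L)%N.
  move=> i si; split; first exact: trunc_logP.
  split; first exact: trunc_log_ltn.
  rewrite -(@ltn_exp2l 2) //; apply: leq_ltn_trans (trunc_logP _ si) _ => //.
  by rewrite -hk; exact: hs.
apply: (@le_trans _ _ (\sum_i \sum_(j < L)
          d * (d + 1) * (if cond i j then v i (X i) (b j) else 0))).
  apply: ler_sum => i _.
  case: (posnP (s i)) => si.
    rewrite big1; last by move=> j _; rewrite /cond si ltnn /= mulr0.
    by rewrite -si upd_self subrr.
  have [h1 [h2 h3]] := tP i si.
  pose j0 : 'I_L := Ordinal h3.
  rewrite (bigD1 j0) //= big1 ?addr0.
    rewrite /cond si eqxx /=.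
    apply: (own_bound (f := v i (X i)) (s := s) (b := b (t i)) (j := t i) d1 hs (hsos _ _)).
    - by move=> p q; exact: hmono.
    - by move=> p hp; exact: hnn.
    - exact: bprof_le.
    - by rewrite /b inE h1.
    - exact: h1.
    - exact: h2.
  move=> j jj0; rewrite /cond si /=; case: eqP => [ej|_]; last by rewrite mulr0.
  by exfalso; move/eqP: jj0; apply; apply: val_inj; rewrite /= -ej.
rewrite exchange_big /= mulr_sumr ler_sum // => j _.
rewrite -mulr_sumr ler_wpM2l //.
set Xj : allocation n m := fun i => if cond i j then X i else set0.
have hb : in_dom k (b j) := le_dom hs (bprof_le j s).
have e : \sum_i (if cond i j then v i (X i) (b j) else 0) = welfare (bucket_val v j s) Xj.
  rewrite /welfare; apply: eq_bigr => i _; rewrite /bucket_val /Xj.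
  case: ifP => c.
    have [h1 _] : (2 ^ t i <= s i)%N /\ _ := tP i (andP c).1.
    by rewrite inE -(eqP (andP c).2) h1.
  by case: ifP => // _; rewrite h0.
rewrite e; case: (hsel (bucket_set j s) (bucket_val v j s)) => _ _ hmax.
apply: le_trans (hmax Xj (feas_restrict _ hX) _) _.
  move=> i iB; rewrite /Xj; case: ifP => // c; exfalso; move: iB; rewrite inE.
  have [h1 _] : (2 ^ t i <= s i)%N /\ _ := tP i (andP c).1.
  by rewrite -(eqP (andP c).2) h1.
rewrite /welfare /RB_alloc; apply: ler_sum => i _; rewrite /bucket_val.
case: ifP => iB; last exact: hnn.
apply: hmono => //; exact: bprof_le.
Qed.

Lemma combine (R : realFieldType) (d Lr N a b : R) :
  0 < Lr -> 0 < N -> 1 <= d ->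
  (d * (d + 1) * Lr + 2 * (d + 1)) *
    (d * Lr / (d * Lr + 2) * (Lr^-1 * a) + (1 - d * Lr / (d * Lr + 2)) * (N^-1 * b))
  = d * (d + 1) * a + 2 * (d + 1) * (N^-1 * b).
Proof.
move=> hL hN d1.
have h1 : d * Lr + 2 != 0 by apply: lt0r_neq0; have := mulr_gt0 (lt_le_trans ltr01 d1) hL; lra.
have h2 : Lr != 0 by exact: lt0r_neq0.
have h3 : N != 0 by exact: lt0r_neq0.
by field; rewrite h1 h2 h3.
Qed.

Unset Implicit Arguments.

Theorem mainTheorem16 (R : realFieldType) (n m k L : nat) (d : R)
  (v : valuations R n m)
  (sel : {set 'I_n} -> ('I_n -> {set 'I_m} -> R) -> allocation n m) :
  (0 < L)%N -> k = (2 ^ L)%N -> 1 <= d ->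
  valuation_ok k d v -> wm_selector sel ->
  (* universally ex-post IC-IR: every deterministic mechanism in the support *)
  (forall j : 'I_L, expost_IC_IR v k (RB_alloc sel v j) (RB_pay sel v j)) /\
  (forall B : {set 'I_n}, expost_IC_IR v k (RS_alloc sel v B) (fun _ _ => 0)) /\
  (* approximation to the optimal social welfare *)
  (forall s : profile n, in_dom k s -> forall X : allocation n m, feasible X ->
     welfare (fun i T => v i T s) X
       <= (d * (d + 1) * L%:R + 2 * (d + 1)) * mech_welfare sel v d L s).
Proof.
move=> hL hk d1 hv hsel.
split; first by move=> j; exact: RB_IC hk hv hsel.
split; first by move=> B; exact: RS_IC hv hsel.
move=> s hs X hX.
have hRB := RB_part hk d1 hv hsel hs hX.
have hRS := RS_part d1 hv hsel hs hX.
rewrite /mech_welfare combine ?ltr0n ?expn_gt0 //.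
set A := \sum_(j < L) _ in hRB *.
set Bs := \sum_(B : {set 'I_n}) _ in hRS *.
have hN : (0 : R) < (2 ^ n)%:R by rewrite ltr0n expn_gt0.
have hoth : \sum_i v i (X i) (upd s i 0) <= 2 * (1 + d) * ((2 ^ n)%:R^-1 * Bs).
  rewrite mulrCA ler_pdivlMl //.
have e : welfare (fun i T => v i T s) X =
   \sum_i (v i (X i) s - v i (X i) (upd s i 0)) + \sum_i v i (X i) (upd s i 0).
  by rewrite -big_split /=; apply: eq_bigr => i _; rewrite subrK.
rewrite e; lra.
Qed.
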